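(* For every positive integer $s$, $$\sum_{n=1}^\infty\frac{(-1)^n}{n^s\,2^n\binom{2n}{n}}\in\mathsf{CMZV}^2_s.$$
   Context: For positive integers $s_1,\dots,s_k$ and complex $a_j$, $L_{s_1,\dots,s_k}(a_1,\dots,a_k)=\sum_{n_1>\cdots>n_k\ge1}\frac{a_1^{n_1}\cdots a_k^{n_k}}{n_1^{s_1}\cdots n_k^{s_k}}$. For integers $N\ge1$, $W\ge1$, $\mathsf{CMZV}^N_W$ is the $\mathbb{Q}$-linear span of all $L_{s_1,\dots,s_k}(a_1,\dots,a_k)$ with $k\ge1$, $s_1+\cdots+s_k=W$, each $a_j$ an $N$-th root of unity, and $(s_1,a_1)\ne(1,1)$. *)

(* Defs.v *)
From Stdlib Require Import Reals QArith Qreals List.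
From Coquelicot Require Import Coquelicot.
Open Scope R_scope.

(* Truncated multiple polylogarithm sum:
   msum [(s1,a1);...;(sk,ak)] M =
     sum_{M >= n1 > n2 > ... > nk >= 1} a1^n1 ... ak^nk / (n1^s1 ... nk^sk). *)
Fixpoint msum (l : list (nat * R)) (M : nat) : R :=
  match l with
  | nil => 1
  | (s, a) :: l' =>
      (fix g (m : nat) : R :=
         match m with
         | O => 0
         | S m' => g m' + a ^ (S m') / (INR (S m')) ^ s * msum l' m'
         end) M
  end.

(* Admissible index data for CMZV^2_W: k >= 1, all s_j >= 1, each a_j a
   2nd root of unity (a_j^2 = 1; these are real), weight W, and
   (s1,a1) <> (1,1). *)
Definition cmzv2_index (W : nat) (l : list (nat * R)) : Prop :=
  l <> nil /\
  List.Forall (fun p => (1 <= fst p)%nat /\ (snd p) ^ 2 = 1) l /\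
  fold_right (fun p acc => (fst p + acc)%nat) 0%nat l = W /\
  (match l with
   | (s1, a1) :: _ => ~ (s1 = 1%nat /\ a1 = 1)
   | nil => True
   end).

(* x lies in the Q-linear span CMZV^2_W: x is a finite Q-linear combination
   of values L_{s}(a) (each value being the limit of the truncated sums). *)
Definition in_CMZV2 (W : nat) (x : R) : Prop :=
  exists terms : list (Q * list (nat * R) * R),
    List.Forall (fun t => cmzv2_index W (snd (fst t)) /\
                     is_lim_seq (msum (snd (fst t))) (Finite (snd t))) terms /\
    x = fold_right (fun t acc => Q2R (fst (fst t)) * snd t + acc) 0 terms.

Definition thm_term (s n : nat) : R :=
  (-1) ^ n / ((INR n) ^ s * 2 ^ n * INR (Factorial.fact (2 * n)) / (INR (Factorial.fact n)) ^ 2).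

(* Main.v *)
Require Import Defs.
From Stdlib Require Import Reals QArith Qreals List.
From Coquelicot Require Import Coquelicot.
From Stdlib Require Import Lra Lia.
Open Scope R_scope.

Lemma msum_cons_S s a l M : msum ((s,a)::l) (S M) = msum ((s,a)::l) M + a ^ (S M) / (INR (S M))^s * msum l M.
Proof. reflexivity. Qed.
Lemma msum_cons_0 s a l : msum ((s,a)::l) 0 = 0.
Proof. reflexivity. Qed.
Lemma msum_nil M : msum nil M = 1.
Proof. reflexivity. Qed.

Definition coef (w : list (nat*R)) (n : nat) : R := match w with
 | nil => match n with O => 1 | S _ => 0 end
 | (s,e)::v => match n with O => 0 | S m => e ^ (S m) / (INR (S m))^s * msum v m end end.

Lemma msum_sum w : w <> nil -> forall M, msum w M = sum_f_R0 (coef w) M.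
Proof.
  destruct w as [|[s e] v]; [congruence|]. intros _.
  induction M. reflexivity.
  rewrite msum_cons_S, IHM. simpl sum_f_R0 at 2. reflexivity.
Qed.

Definition good (p : nat * R) := (1 <= fst p)%nat /\ snd p ^ 2 = 1.

Lemma abs_pow_e e n : e ^ 2 = 1 -> Rabs (e ^ n) = 1.
Proof.
  intros H. rewrite <- RPow_abs.
  assert (Rabs e = 1).
  { assert (Rabs e * Rabs e = 1) by (rewrite <- Rabs_mult; simpl in H; rewrite Rmult_1_r in H; rewrite H; apply Rabs_R1).
    assert (0 <= Rabs e) by apply Rabs_pos. nra. }
  rewrite H0. apply pow1.
Qed.

Lemma INR_S_pos n : 0 < INR (S n).
Proof. apply lt_0_INR; lia. Qed.

Lemma term_bound s e n : good (s,e) -> Rabs (e ^ (S n) / INR (S n) ^ s) <= / INR (S n).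
Proof.
  intros [Hs He]; simpl in Hs, He.
  unfold Rdiv. rewrite Rabs_mult, abs_pow_e by exact He. rewrite Rmult_1_l.
  pose proof (INR_S_pos n).
  rewrite Rabs_inv, Rabs_pos_eq by (apply pow_le; lra).
  apply Rinv_le_contravar. lra.
  rewrite <- (pow_1 (INR (S n))) at 1. apply Rle_pow; auto.
  rewrite S_INR. pose proof (pos_INR n). lra.
Qed.

Lemma sqrt_step m : 2 * sqrt (INR m) + / sqrt (INR m + 1) <= 2 * sqrt (INR m + 1).
Proof.
  pose proof (pos_INR m).
  set (a := sqrt (INR m)). set (b := sqrt (INR m + 1)).
  assert (Ha : 0 <= a) by apply sqrt_pos.
  assert (Hb : 0 < b) by (apply sqrt_lt_R0; lra).
  assert (Ha2 : a * a = INR m) by (apply sqrt_sqrt; lra).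
  assert (Hb2 : b * b = INR m + 1) by (apply sqrt_sqrt; lra).
  assert (/ b = b / (INR m + 1)) by (rewrite <- Hb2; field; lra).
  rewrite H0.
  apply Rmult_le_reg_r with (INR m + 1). lra.
  replace ((2 * a + b / (INR m + 1)) * (INR m + 1)) with (2 * a * (INR m + 1) + b) by (field; lra).
  assert (0 <= b * ((a - b) * (a - b))) by (apply Rmult_le_pos; [lra| apply Rle_0_sqr]).
  nra.
Qed.

Lemma msum_bound v : List.Forall good v -> forall m, Rabs (msum v m) <= 2 ^ (length v) * sqrt (INR m + 1).
Proof.
  induction v as [|[s e] v IH]; intros Hv m.
  - rewrite msum_nil. simpl. rewrite Rabs_R1, Rmult_1_l.
    rewrite <- sqrt_1 at 1. apply sqrt_le_1_alt. pose proof (pos_INR m); lra.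
  - inversion Hv as [|? ? Hg Hv']; subst.
    specialize (IH Hv').
    assert (Hk : forall m, Rabs (msum ((s,e)::v) m) <= 2 ^ length v * (2 * sqrt (INR m))).
    { induction m0.
      - rewrite msum_cons_0, Rabs_R0. simpl. rewrite sqrt_0. lra.
      - rewrite msum_cons_S.
        eapply Rle_trans. apply Rabs_triang.
        rewrite Rabs_mult.
        assert (H1 := term_bound s e m0 Hg).
        assert (H2 := IH m0).
        assert (H3 := sqrt_step m0).
        pose proof (INR_S_pos m0).
        assert (Hq : / INR (S m0) * sqrt (INR m0 + 1) = / sqrt (INR m0 + 1)).
        { rewrite S_INR. assert (Hp := pos_INR m0).
          assert (Hs2 := sqrt_sqrt (INR m0 + 1) ltac:(lra)).
          assert (Hsp : 0 < sqrt (INR m0+1)) by (apply sqrt_lt_R0; lra).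
          rewrite <- Hs2 at 1. field. lra. }
        assert (0 <= 2 ^ length v) by (apply pow_le; lra).
        apply Rle_trans with (2 ^ length v * (2 * sqrt (INR m0)) + / INR (S m0) * (2 ^ length v * sqrt (INR m0 + 1))).
        apply Rplus_le_compat. exact IHm0.
        apply Rmult_le_compat; try apply Rabs_pos; assumption.
        replace (/ INR (S m0) * (2 ^ length v * sqrt (INR m0 + 1))) with (2 ^ length v * (/ INR (S m0) * sqrt (INR m0 + 1))) by ring.
        rewrite Hq. rewrite <- Rmult_plus_distr_l. rewrite S_INR. apply Rmult_le_compat_l; auto. }
    eapply Rle_trans. apply Hk.
    simpl length. rewrite <- tech_pow_Rmult.
    assert (0 <= 2 ^ length v) by (apply pow_le; lra).
    assert (sqrt (INR m) <= sqrt (INR m + 1)) by (apply sqrt_le_1_alt; lra).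
    nra.
Qed.

Lemma sum_telesc (u : nat -> R) N : sum_f_R0 (fun n => u n - u (S n)) N = u 0%nat - u (S N).
Proof.
  induction N. reflexivity.
  simpl sum_f_R0. rewrite IHN. ring.
Qed.

Lemma telesc (u : nat -> R) : is_lim_seq u 0 -> is_series (fun n => u n - u (S n)) (u 0%nat).
Proof.
  intros H.
  assert (H1 : is_lim_seq (fun N => u 0%nat - u (S N)) (u 0%nat - 0)).
  { apply is_lim_seq_minus'. apply is_lim_seq_const. apply -> is_lim_seq_incr_1. exact H. }
  rewrite Rminus_0_r in H1.
  apply is_lim_seq_ext with (v := sum_n (fun n => u n - u (S n))) in H1.
  exact H1.
  intros; now rewrite sum_n_Reals, sum_telesc.
Qed.

Lemma lim_inv_S : is_lim_seq (fun n => / INR (S n)) 0.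
Proof.
  assert (H : is_lim_seq (fun n => INR (S n)) p_infty).
  { apply -> is_lim_seq_incr_1. apply is_lim_seq_INR. }
  apply is_lim_seq_inv in H. exact H. discriminate.
Qed.

Lemma lim_inv_sqrt : is_lim_seq (fun n => / sqrt (INR n + 1)) 0.
Proof.
  assert (H := is_lim_seq_continuous sqrt _ 0 ltac:(apply continuity_pt_filterlim, continuous_sqrt) lim_inv_S).
  rewrite sqrt_0 in H.
  eapply is_lim_seq_ext; [|exact H].
  intros n; cbv beta. rewrite sqrt_inv, S_INR. reflexivity.
Qed.

Lemma inv32_le n : / ((INR n + 1) * sqrt (INR n + 1)) <= 8 * (/ sqrt (INR n + 1) - / sqrt (INR (S n) + 1)).
Proof.
  rewrite S_INR. pose proof (pos_INR n).
  set (a := sqrt (INR n + 1)). set (b := sqrt (INR n + 1 + 1)).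
  assert (Ha2 : a * a = INR n + 1) by (apply sqrt_sqrt; lra).
  assert (Hb2 : b * b = INR n + 1 + 1) by (apply sqrt_sqrt; lra).
  assert (Ha : 0 <= a) by apply sqrt_pos. assert (Hb : 0 <= b) by apply sqrt_pos.
  assert (Ha1 : 1 <= a). { unfold a. apply Rle_trans with (sqrt 1). rewrite sqrt_1; lra. apply sqrt_le_1_alt. lra. }
  assert (Hba : a <= b) by (unfold a, b; apply sqrt_le_1_alt; lra).
  assert (Hb2a : b <= 2 * a). { destruct (Rle_dec b (2 * a)) as [?|Hn]; auto. assert (0 < (b - 2 * a) * (b + 2 * a)) by (apply Rmult_lt_0_compat; lra). nra. }
  assert (Hd : b - a = / (a + b)).
  { apply Rmult_eq_reg_r with (a + b). rewrite Rinv_l by lra. nra. lra. }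
  replace (/ a - / b) with ((b - a) / (a * b)) by (field; lra).
  rewrite Hd. rewrite <- Ha2.
  replace (8 * (/ (a + b) / (a * b))) with (/ (a * b * (a + b) / 8)) by (field; repeat split; lra).
  apply Rinv_le_contravar. 
  apply Rmult_lt_0_compat; [|lra]. apply Rmult_lt_0_compat; nra.
  assert (a * b * (a + b) <= a * (2 * a) * (3 * a)).
  { apply Rmult_le_compat; try nra. }
  nra.
Qed.

Lemma ex_series_32 : ex_series (fun n => / ((INR n + 1) * sqrt (INR n + 1))).
Proof.
  apply (@ex_series_le R_AbsRing R_CompleteNormedModule _ (fun n => 8 * (/ sqrt (INR n + 1) - / sqrt (INR (S n) + 1)))).
  - intros n. rewrite Rabs_pos_eq. apply inv32_le.
    pose proof (pos_INR n). apply Rlt_le, Rinv_0_lt_compat, Rmult_lt_0_compat. lra. apply sqrt_lt_R0; lra.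
  - apply (ex_series_ext (fun n => scal 8 (/ sqrt (INR n + 1) - / sqrt (INR (S n) + 1)))). reflexivity.
    apply (@ex_series_scal_l R_AbsRing R_NormedModule 8 (fun n => (/ sqrt (INR n + 1) - / sqrt (INR (S n) + 1)))). eexists. apply (telesc (fun n => / sqrt (INR n + 1))). apply lim_inv_sqrt.
Qed.

Lemma alt_series (b : nat -> R) : is_lim_seq b 0 -> ex_series (fun n => Rabs (b n - b (S n))) ->
  ex_series (fun n => (-1) ^ n * b n).
Proof.
  intros Hb Hd.
  set (u := fun n => (-1) ^ n * b n / 2).
  assert (Hu : is_lim_seq u 0).
  { unfold u. apply is_lim_seq_abs_0. apply is_lim_seq_abs_0 in Hb.
    eapply is_lim_seq_ext; [| apply (is_lim_seq_scal_l _ (/2)) in Hb; simpl in Hb; rewrite Rmult_0_r in Hb; exact Hb].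
    intros n. unfold Rdiv. rewrite !Rabs_mult, pow_1_abs. rewrite (Rabs_pos_eq (/2)) by lra. ring. }
  assert (H1 : ex_series (fun n => u n - u (S n))) by (eexists; apply telesc; exact Hu).
  assert (H2 : ex_series (fun n => (-1) ^ n * (b n - b (S n)) / 2)).
  { apply ex_series_Rabs. apply (@ex_series_le R_AbsRing R_CompleteNormedModule _ (fun n => Rabs (b n - b (S n)))); [|exact Hd].
    intros n. unfold norm; simpl. unfold abs; simpl. rewrite Rabs_Rabsolu.
    unfold Rdiv. rewrite !Rabs_mult, pow_1_abs. rewrite (Rabs_pos_eq (/2)) by lra. 
    pose proof (Rabs_pos (b n - b (S n))). lra. }
  destruct H1 as [l1 H1]. destruct H2 as [l2 H2].
  exists (plus l1 l2). eapply is_series_ext; [|apply (is_series_plus _ _ _ _ H1 H2)].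
  intros n. unfold u, plus; simpl. field.
Qed.

Lemma sqrt_facts m : 1 <= sqrt (INR m + 1) /\ sqrt (INR m + 1) * sqrt (INR m + 1) = INR (S m).
Proof.
  pose proof (pos_INR m). split.
  - apply Rle_trans with (sqrt 1). rewrite sqrt_1; lra. apply sqrt_le_1_alt. lra.
  - rewrite sqrt_sqrt, S_INR; lra.
Qed.

Lemma coef_S s e v m : coef ((s,e)::v) (S m) = e ^ (S m) / INR (S m) ^ s * msum v m.
Proof. reflexivity. Qed.

Lemma coef_bound s e v m : good (s,e) -> List.Forall good v ->
  Rabs (coef ((s,e)::v) (S m)) <= 2 ^ length v / sqrt (INR m + 1).
Proof.
  intros Hg Hv. rewrite coef_S. rewrite Rabs_mult.
  pose proof (term_bound s e m Hg). pose proof (msum_bound v Hv m).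
  destruct (sqrt_facts m) as [H1 H2]. set (r := sqrt (INR m + 1)) in *.
  rewrite <- H2 in H |- *.
  apply Rle_trans with (/ (r * r) * (2 ^ length v * r)).
  apply Rmult_le_compat; [apply Rabs_pos|apply Rabs_pos|exact H|exact H0].
  right. field. lra.
Qed.

Lemma term_bound2 s e n : good (s,e) -> (2 <= s)%nat -> Rabs (e ^ (S n) / INR (S n) ^ s) <= / (INR (S n) * INR (S n)).
Proof.
  intros [Hs He] H2; simpl in Hs, He.
  unfold Rdiv. rewrite Rabs_mult, abs_pow_e by exact He. rewrite Rmult_1_l.
  pose proof (INR_S_pos n).
  rewrite Rabs_inv, Rabs_pos_eq by (apply pow_le; lra).
  apply Rinv_le_contravar. nra.
  replace (INR (S n) * INR (S n)) with (INR (S n) ^ 2) by ring. apply Rle_pow; auto.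
  rewrite S_INR. pose proof (pos_INR n). lra.
Qed.

Lemma coef_bound2 s e v m : good (s,e) -> (2 <= s)%nat -> List.Forall good v ->
  Rabs (coef ((s,e)::v) (S m)) <= 2 ^ length v * / ((INR m + 1) * sqrt (INR m + 1)).
Proof.
  intros Hg Hs Hv. rewrite coef_S. rewrite Rabs_mult.
  pose proof (term_bound2 s e m Hg Hs). pose proof (msum_bound v Hv m).
  destruct (sqrt_facts m) as [H1 H2]. set (r := sqrt (INR m + 1)) in *.
  rewrite <- H2 in H |- *. rewrite S_INR in H2. rewrite <- H2.
  apply Rle_trans with (/ (r * r * (r * r)) * (2 ^ length v * r)).
  apply Rmult_le_compat; [apply Rabs_pos|apply Rabs_pos|exact H|exact H0].
  right. field. lra.
Qed.

Lemma msum_diff v m : List.Forall good v ->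
  Rabs (msum v (S m) - msum v m) <= 2 ^ length v / sqrt (INR m + 1).
Proof.
  intros Hv. destruct v as [|[s e] v'].
  - rewrite !msum_nil. rewrite Rminus_diag, Rabs_R0. simpl.
    destruct (sqrt_facts m). apply Rmult_le_pos. lra. apply Rlt_le, Rinv_0_lt_compat. lra.
  - inversion Hv; subst. rewrite msum_cons_S.
    replace (msum ((s, e) :: v') m + e ^ S m / INR (S m) ^ s * msum v' m - msum ((s, e) :: v') m)
      with (coef ((s,e)::v') (S m)) by (rewrite coef_S; ring).
    eapply Rle_trans. apply coef_bound; auto.
    simpl length. rewrite <- tech_pow_Rmult.
    destruct (sqrt_facts m). unfold Rdiv. apply Rmult_le_compat_r. apply Rlt_le, Rinv_0_lt_compat. lra.
    pose proof (pow_le 2 (length v') ltac:(lra)). lra.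
Qed.

Lemma diff_bound (A D K r : R) : 1 <= r -> 0 <= K -> Rabs A <= K * r -> Rabs D <= K / r ->
  Rabs (- A / (r*r) - (- (A + D) / (r*r+1))) <= 2 * K * / ((r * r) * r).
Proof.
  intros Hr HK HA HD.
  assert (Hr0 : r <> 0) by lra. assert (Hr1 : r*r+1 <> 0) by nra.
  replace (- A / (r*r) - (- (A + D) / (r*r+1))) with (D * / (r*r+1) - A * / (r*r*(r*r+1))) by (field; auto).
  eapply Rle_trans. apply Rabs_triang. rewrite Rabs_Ropp, !Rabs_mult.
  assert (0 < r*r+1) by nra. assert (0 < r*r*(r*r+1)) by (apply Rmult_lt_0_compat; nra).
  rewrite (Rabs_pos_eq (/ (r*r+1))) by (apply Rlt_le, Rinv_0_lt_compat; lra).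
  rewrite (Rabs_pos_eq (/ (r*r*(r*r+1)))) by (apply Rlt_le, Rinv_0_lt_compat; lra).
  apply Rle_trans with (K / r * / (r*r+1) + K * r * / (r*r*(r*r+1))).
  apply Rplus_le_compat; apply Rmult_le_compat_r; try (apply Rlt_le, Rinv_0_lt_compat; lra); assumption.
  replace (K / r * / (r*r+1) + K * r * / (r*r*(r*r+1))) with (2 * K * / (r * (r*r+1))) by (field; auto).
  apply Rmult_le_compat_l. lra. apply Rinv_le_contravar. nra. nra.
Qed.

Lemma coef_conv s e v : List.Forall good ((s,e)::v) -> ~ (s = 1%nat /\ e = 1) -> ex_series (coef ((s,e)::v)).
Proof.
  intros Hw Hne. inversion Hw as [|? ? Hg Hv]; subst.
  apply ex_series_incr_1.
  destruct (Nat.le_gt_cases 2 s) as [Hs|Hs].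
  - apply ex_series_Rabs.
    apply (@ex_series_le R_AbsRing R_CompleteNormedModule _ (fun m => 2 ^ length v * / ((INR m + 1) * sqrt (INR m + 1)))).
    + intros m. unfold norm; simpl. unfold abs; simpl. rewrite Rabs_Rabsolu. apply coef_bound2; auto.
    + apply (@ex_series_scal_l R_AbsRing R_NormedModule (2 ^ length v) (fun m => / ((INR m + 1) * sqrt (INR m + 1)))).
      apply ex_series_32.
  - assert (s = 1%nat) by (destruct Hg as [Hg _]; simpl in Hg; lia). subst s.
    assert (He : e = -1).
    { destruct Hg as [_ He]. simpl in He. destruct (Req_dec e 1) as [E|E]. exfalso; apply Hne; auto.
      assert ((e - 1) * (e + 1) = 0) by nra. apply Rmult_integral in H. destruct H; [exfalso; apply E; lra| lra]. }
    subst e.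
    set (b := fun m => - msum v m / INR (S m)).
    apply (ex_series_ext (fun m => (-1) ^ m * b m)).
    { intros m. change (@eq R ((-1) ^ m * b m) (coef ((1%nat, -1) :: v) (S m))). unfold b. rewrite coef_S. rewrite pow_1, <- tech_pow_Rmult. field. pose proof (INR_S_pos m); lra. }
    apply alt_series.
    + apply is_lim_seq_abs_0.
      apply (is_lim_seq_le_le (fun _ => 0) _ (fun m => 2 ^ length v * / sqrt (INR m + 1))).
      * intros m. split. apply Rabs_pos. unfold b.
        destruct (sqrt_facts m) as [H1 H2]. pose proof (msum_bound v Hv m). set (r := sqrt (INR m + 1)) in *.
        rewrite <- H2. unfold Rdiv. rewrite Rabs_mult, Rabs_Ropp, Rabs_inv, (Rabs_pos_eq (r * r)) by nra.
        apply Rle_trans with (2 ^ length v * r * / (r * r)).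
        apply Rmult_le_compat_r. apply Rlt_le, Rinv_0_lt_compat; nra. assumption.
        right. field. lra.
      * apply is_lim_seq_const.
      * replace 0 with (2 ^ length v * 0) by ring. apply is_lim_seq_scal_l with (lu := Finite 0). apply lim_inv_sqrt.
    + apply (@ex_series_le R_AbsRing R_CompleteNormedModule _ (fun m => 2 * 2 ^ length v * / ((INR m + 1) * sqrt (INR m + 1)))).
      * intros m. unfold norm; simpl. unfold abs; simpl. rewrite Rabs_Rabsolu. unfold b.
        destruct (sqrt_facts m) as [H1 H2]. pose proof (msum_bound v Hv m). pose proof (msum_diff v m Hv).
        set (r := sqrt (INR m + 1)) in *.
        replace (msum v (S m)) with (msum v m + (msum v (S m) - msum v m)) by ring.
        rewrite <- H2. rewrite (S_INR (S m)), <- H2. rewrite S_INR in H2. rewrite <- H2.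
        apply diff_bound; auto. apply pow_le; lra.
      * apply (@ex_series_scal_l R_AbsRing R_NormedModule (2 * 2 ^ length v) (fun m => / ((INR m + 1) * sqrt (INR m + 1)))).
        apply ex_series_32.
Qed.

Definition R1 (a : nat -> R) := Rbar_le 1 (CV_radius a).

Lemma R1_bounded a M : (forall n, Rabs (a n) <= M) -> R1 a.
Proof.
  intros H. unfold R1. destruct (CV_radius_bounded a) as [H1 _].
  apply H1. exists M. intros n. rewrite pow1, Rmult_1_r. apply H.
Qed.

Lemma R1_lt a x : R1 a -> Rabs x < 1 -> Rbar_lt (Rabs x) (CV_radius a).
Proof. intros H Hx. eapply Rbar_lt_le_trans; [|exact H]. exact Hx. Qed.

Lemma R1_ex a x : R1 a -> Rabs x < 1 -> ex_pseries a x.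
Proof. intros H Hx. apply CV_radius_inside, R1_lt; auto. Qed.

Lemma R1_derive a : R1 a -> R1 (PS_derive a).
Proof. unfold R1. rewrite CV_radius_derive. auto. Qed.

Definition Lam (w : list (nat * R)) (x : R) := PSeries (coef w) x.

Lemma coef_R1 w : List.Forall good w -> R1 (coef w).
Proof.
  intros Hw. destruct w as [|[s e] v].
  - apply (R1_bounded _ 1). intros [|n]; simpl; rewrite ?Rabs_R1, ?Rabs_R0; lra.
  - inversion Hw; subst. apply (R1_bounded _ (2 ^ length v)).
    intros [|m]. simpl coef. rewrite Rabs_R0. apply pow_le; lra.
    eapply Rle_trans. apply coef_bound; auto.
    destruct (sqrt_facts m) as [Hs1 Hs2]. unfold Rdiv.
    rewrite <- (Rmult_1_r (2 ^ length v)) at 2. apply Rmult_le_compat_l. apply pow_le; lra.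
    apply Rle_trans with (/ 1). apply Rinv_le_contravar; lra. rewrite Rinv_1; lra.
Qed.

Lemma Lam_nil x : Lam nil x = 1.
Proof.
  unfold Lam. rewrite PSeries_decr_1.
  - rewrite (PSeries_ext _ (fun _ => 0)) by (intros; reflexivity). rewrite PSeries_const_0. simpl; ring.
  - apply ex_pseries_R. apply ex_series_incr_1.
    exists 0. assert (H : is_lim_seq (fun _ => 0) 0) by apply is_lim_seq_const.
    eapply is_lim_seq_ext in H; [exact H|]. intros N. cbv beta. rewrite sum_n_Reals.
    induction N; [simpl; ring| rewrite tech5, <- IHN; simpl; ring].
Qed.

Lemma Lam_0 w : w <> nil -> Lam w 0 = 0.
Proof. intros H. unfold Lam. rewrite PSeries_0. destruct w as [|[s e] v]; [congruence|reflexivity]. Qed.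

Definition bump (w : list (nat * R)) := match w with nil => nil | (s,e)::v => (S s, e)::v end.
Definition flip (w : list (nat * R)) := match w with nil => nil | (s,e)::v => (s, -e)::v end.

Lemma good_flip w : List.Forall good w -> List.Forall good (flip w).
Proof.
  intros H. destruct w as [|[s e] v]; simpl; auto. inversion H; subst. constructor; auto.
  destruct H2 as [Ha Hb]; split; simpl fst in *; simpl snd in *; auto. rewrite <- Hb. ring.
Qed.

Lemma good_bump w : List.Forall good w -> List.Forall good (bump w).
Proof.
  intros H. destruct w as [|[s e] v]; simpl; auto. inversion H; subst. constructor; auto.
  destruct H2; split; simpl in *; auto.
Qed.

Lemma Lam_derive_bump s e v x : List.Forall good ((s,e)::v) -> x <> 0 -> Rabs x < 1 ->
  is_derive (Lam ((S s, e)::v)) x (Lam ((s,e)::v) x / x).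
Proof.
  intros Hw Hx0 Hx.
  assert (Hb : R1 (coef ((S s, e)::v))) by (apply coef_R1; apply (good_bump ((s,e)::v)); auto).
  assert (Ha : R1 (coef ((s, e)::v))) by (apply coef_R1; auto).
  unfold Lam. replace (PSeries (coef ((s, e) :: v)) x / x) with (PSeries (PS_derive (coef ((S s, e) :: v))) x).
  apply is_derive_PSeries. apply R1_lt; auto.
  rewrite (PSeries_decr_1 (coef ((s, e) :: v))) by (apply R1_ex; auto).
  change (coef ((s, e) :: v) 0%nat) with 0.
  replace ((0 + x * PSeries (PS_decr_1 (coef ((s, e) :: v))) x) / x) with (PSeries (PS_decr_1 (coef ((s, e) :: v))) x) by (field; auto).
  apply PSeries_ext. intros n. unfold PS_derive, PS_decr_1. rewrite !coef_S.
  rewrite <- (tech_pow_Rmult (INR (S n)) s). pose proof (INR_S_pos n). field. split.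
  apply pow_nonzero; lra. lra.
Qed.

Lemma neg_pow e n : (- e) ^ n = (-1) ^ n * e ^ n.
Proof. rewrite <- Rpow_mult_distr. f_equal. ring. Qed.

Lemma Lam_derive_alt u x : List.Forall good u -> Rabs x < 1 ->
  is_derive (Lam ((1%nat, -1)::u)) x (- Lam (flip u) x / (1 + x)).
Proof.
  intros Hu Hx.
  assert (Hw : List.Forall good ((1%nat, -1)::u)).
  { constructor; auto. split; simpl; auto. ring. }
  assert (Ha : R1 (coef ((1%nat, -1)::u))) by (apply coef_R1; auto).
  assert (Hf : R1 (coef (flip u))) by (apply coef_R1, good_flip; auto).
  assert (Hd : R1 (PS_derive (coef ((1%nat, -1)::u)))) by (apply R1_derive; auto).
  assert (H1x : 1 + x <> 0) by (apply Rabs_def2 in Hx; lra).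
  unfold Lam. replace (- PSeries (coef (flip u)) x / (1 + x)) with (PSeries (PS_derive (coef ((1%nat, -1)::u))) x).
  apply is_derive_PSeries. apply R1_lt; auto.
  set (d := PS_derive (coef ((1%nat, -1)::u))).
  assert (E : PSeries (PS_plus d (PS_incr_1 d)) x = - PSeries (coef (flip u)) x).
  { assert (Hc : forall n, d n + (match n with O => 0 | S m => d m end) = - coef (flip u) n).
    { intros n. unfold d, PS_derive.
      destruct n as [|m].
      - rewrite coef_S. destruct u as [|[s e] u']; simpl; field.
      - rewrite !coef_S. pose proof (INR_S_pos m). pose proof (INR_S_pos (S m)).
        destruct u as [|[s e] u'].
        + rewrite !msum_nil. simpl coef. rewrite !pow_1.
          rewrite <- (tech_pow_Rmult (-1) (S m)), <- (tech_pow_Rmult (-1) m). field. lra.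
        + simpl flip. rewrite coef_S. rewrite msum_cons_S, neg_pow. rewrite !pow_1.
          rewrite <- (tech_pow_Rmult (-1) (S m)), <- (tech_pow_Rmult (-1) m).
          field. split. apply pow_nonzero; lra. split; lra. }
    rewrite <- PSeries_opp. apply PSeries_ext. intros n. apply Hc. }
  rewrite <- E. rewrite PSeries_plus. rewrite PSeries_incr_1. field. auto.
  apply R1_ex; auto. apply ex_pseries_incr_1, R1_ex; auto.
Qed.

Definition acoef (s n : nat) : R := match n with
  | O => 0
  | S m => INR (Factorial.fact (S m)) ^ 2 / (INR (S m) ^ s * INR (Factorial.fact (2 * S m))) end.

Definition Fs s z := PSeries (acoef s) z.
Definition zf x := - (x * x) / (1 + x).

Lemma fact_sq n : (Factorial.fact n * Factorial.fact n <= Factorial.fact (2 * n))%nat.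
Proof.
  induction n. simpl; lia.
  replace (2 * S n)%nat with (S (S (2 * n))) by lia.
  change (Factorial.fact (S (S (2 * n)))) with (S (S (2*n)) * (S (2 * n) * Factorial.fact (2 * n)))%nat.
  change (Factorial.fact (S n)) with (S n * Factorial.fact n)%nat.
  nia.
Qed.

Lemma acoef_bound s n : Rabs (acoef s n) <= 1.
Proof.
  destruct n as [|m]. simpl. rewrite Rabs_R0; lra.
  unfold acoef. pose proof (INR_S_pos m).
  assert (H1 : 1 <= INR (S m) ^ s). { apply pow_R1_Rle. rewrite S_INR. pose proof (pos_INR m). lra. }
  assert (H2 : INR (Factorial.fact (S m)) ^ 2 <= INR (Factorial.fact (2 * S m))).
  { replace (INR (Factorial.fact (S m)) ^ 2) with (INR (Factorial.fact (S m) * Factorial.fact (S m))) by (rewrite mult_INR; ring). apply le_INR, fact_sq. }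
  assert (H3 : 0 < INR (Factorial.fact (2 * S m))) by (apply INR_fact_lt_0).
  rewrite Rabs_pos_eq.
  - apply Rmult_le_reg_r with (INR (S m) ^ s * INR (Factorial.fact (2 * S m))). nra.
    unfold Rdiv. rewrite Rmult_assoc, Rinv_l by nra. nra.
  - apply Rmult_le_pos. apply pow_le, pos_INR. apply Rlt_le, Rinv_0_lt_compat. nra.
Qed.

Lemma acoef_R1 s : R1 (acoef s).
Proof. apply (R1_bounded _ 1). apply acoef_bound. Qed.

Lemma acoef_derive s n : PS_derive (acoef (S s)) n = acoef s (S n).
Proof.
  unfold PS_derive, acoef. rewrite <- (tech_pow_Rmult (INR (S n)) s).
  pose proof (INR_S_pos n). field. split. apply INR_fact_neq_0. split. apply pow_nonzero; lra. lra.
Qed.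

Lemma Fs_decr s z : Rabs z < 1 -> Fs s z = z * PSeries (PS_decr_1 (acoef s)) z.
Proof.
  intros H. unfold Fs. rewrite PSeries_decr_1. simpl acoef. ring.
  apply R1_ex; auto. apply acoef_R1.
Qed.

Lemma Fs_derive s z : Rabs z < 1 -> is_derive (Fs (S s)) z (PSeries (PS_decr_1 (acoef s)) z).
Proof.
  intros H. unfold Fs. replace (PSeries (PS_decr_1 (acoef s)) z) with (PSeries (PS_derive (acoef (S s))) z).
  apply is_derive_PSeries. apply R1_lt; auto. apply acoef_R1.
  apply PSeries_ext. intros n. apply acoef_derive.
Qed.

Lemma zf_small x : 0 <= x <= 1 -> Rabs (zf x) < 1.
Proof.
  intros H. unfold zf. rewrite Rabs_left1.
  - apply Rmult_lt_reg_r with (1 + x). lra. unfold Rdiv. 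
    replace (- (- (x * x) * / (1 + x)) * (1 + x)) with (x * x) by (field; lra). nra.
  - unfold Rdiv. apply Rmult_le_0_r. nra. apply Rlt_le, Rinv_0_lt_compat; lra.
Qed.

Lemma zf_derive x : 0 <= x -> is_derive zf x (- (x * (2 + x)) / ((1 + x) * (1 + x))).
Proof.
  intros H. unfold zf. auto_derive. lra. field. lra.
Qed.

Lemma FDz s x : 0 < x <= 1 -> is_derive (fun x => Fs (S s) (zf x)) x ((2 + x) / (x * (1 + x)) * Fs s (zf x)).
Proof.
  intros H.
  assert (Hz := zf_small x ltac:(lra)).
  eapply is_derive_ext; [intros; reflexivity|].
  replace ((2 + x) / (x * (1 + x)) * Fs s (zf x)) with (scal (- (x * (2 + x)) / ((1 + x) * (1 + x))) (PSeries (PS_decr_1 (acoef s)) (zf x))).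
  apply (is_derive_comp (Fs (S s)) zf). apply Fs_derive; auto. apply zf_derive; lra.
  rewrite Fs_decr by auto. match goal with |- ?a = ?b => change (@eq R a b) end. unfold zf. change scal with Rmult. field. lra.
Qed.

Lemma FDz_ex s x : 0 <= x <= 1 -> ex_derive (fun x => Fs s (zf x)) x.
Proof.
  intros H. destruct s as [|s].
  - assert (Hz := zf_small x H). exists (scal (- (x * (2 + x)) / ((1 + x) * (1 + x))) (PSeries (PS_derive (acoef 0)) (zf x))).
    apply (is_derive_comp (Fs 0) zf). apply is_derive_PSeries. apply R1_lt; auto. apply acoef_R1. apply zf_derive; lra.
  - assert (Hz := zf_small x H). eexists. apply (is_derive_comp (Fs (S s)) zf). apply Fs_derive; auto. apply zf_derive; lra.
Qed.

Lemma fact_2S n : INR (Factorial.fact (2 * S n)) = (2 * INR n + 2) * (2 * INR n + 1) * INR (Factorial.fact (2 * n)).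
Proof.
  replace (2 * S n)%nat with (S (S (2 * n))) by lia.
  change (Factorial.fact (S (S (2 * n)))) with (S (S (2*n)) * (S (2 * n) * Factorial.fact (2 * n)))%nat.
  rewrite !mult_INR, !S_INR, mult_INR. simpl INR. ring.
Qed.

Lemma acoef_rec n : 4 * acoef 0 n - (match n with O => 0 | S m => acoef 0 m end) - 2 * acoef 1 n
   = match n with 1%nat => 1 | _ => 0 end.
Proof.
  destruct n as [|[|k]].
  - simpl. ring.
  - simpl. field.
  - unfold acoef. rewrite !fact_2S.
    change (Factorial.fact (S (S k))) with (S (S k) * Factorial.fact (S k))%nat.
    rewrite mult_INR.
    rewrite !S_INR. pose proof (pos_INR k).
    pose proof (INR_fact_neq_0 (S k)). pose proof (INR_fact_neq_0 (2 * k)).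
    field. repeat split; try lra. 
Qed.

Lemma sum_mono (f : nat -> R) M N : (forall n, 0 <= f n) -> (M <= N)%nat -> sum_f_R0 f M <= sum_f_R0 f N.
Proof.
  intros Hf HMN. induction HMN. lra. rewrite tech5. specialize (Hf (S m)). lra.
Qed.

Lemma sum_split_bound (f g : nat -> R) N0 : (forall n, 0 <= f n) -> (forall n, 0 <= g n) ->
  (forall n, (N0 < n)%nat -> f n <= g n) -> forall M, sum_f_R0 f M <= sum_f_R0 f N0 + sum_f_R0 g M.
Proof.
  intros Hf Hg Hfg M. induction M.
  - simpl. pose proof (sum_mono f 0 N0 Hf ltac:(lia)). simpl in H. specialize (Hg 0%nat). lra.
  - destruct (Nat.le_gt_cases (S M) N0).
    + pose proof (sum_mono f (S M) N0 Hf H).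
      assert (0 <= sum_f_R0 g (S M)) by (apply cond_pos_sum; auto). lra.
    + rewrite !tech5. specialize (Hfg (S M) H). lra.
Qed.

Lemma abel_id (a : nat -> R) x l M :
  sum_f_R0 (fun n => a n * x ^ n) M - l =
  (1 - x) * sum_f_R0 (fun n => (sum_f_R0 a n - l) * x ^ n) M + (sum_f_R0 a M - l) * x ^ (S M).
Proof.
  induction M.
  - simpl. ring.
  - rewrite !tech5. simpl pow.
    replace (sum_f_R0 (fun n : nat => a n * x ^ n) M + a (S M) * (x * x ^ M) - l)
      with ((sum_f_R0 (fun n : nat => a n * x ^ n) M - l) + a (S M) * (x * x ^ M)) by ring.
    rewrite IHM. simpl pow. ring.
Qed.

Lemma series_lim (a : nat -> R) l : is_series a l -> is_lim_seq (fun n => sum_f_R0 a n) l.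
Proof.
  intros H. apply is_lim_seq_ext with (u := sum_n a). intros; apply sum_n_Reals. exact H.
Qed.

Lemma abel_eps (a : nat -> R) l : is_series a l -> (forall x, 0 <= x < 1 -> ex_pseries a x) ->
  forall eps, 0 < eps -> exists d, 0 < d /\ forall x, 1 - d < x < 1 -> Rabs (PSeries a x - l) < eps.
Proof.
  intros Hl Hex eps Heps.
  apply series_lim in Hl. apply is_lim_seq_spec in Hl.
  destruct (Hl (mkposreal (eps/2) ltac:(lra))) as [N0 HN0]. simpl in HN0.
  set (C := sum_f_R0 (fun n => Rabs (sum_f_R0 a n - l)) N0).
  assert (HC : 0 <= C) by (apply cond_pos_sum; intros; apply Rabs_pos).
  exists (Rmin 1 (eps / (2 * (C + 1)))). split.
  { apply Rmin_pos. lra. apply Rdiv_lt_0_compat; lra. }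
  intros x [Hx1 Hx2].
  assert (Hd1 := Rmin_l 1 (eps / (2 * (C + 1)))). assert (Hd2 := Rmin_r 1 (eps / (2 * (C + 1)))).
  assert (Hx0 : 0 < x) by lra.
  assert (Hxn : forall n, 0 <= x ^ n <= 1).
  { intros n. induction n. simpl; lra. simpl. nra. }
  assert (HT : is_lim_seq (fun M => sum_f_R0 (fun n => a n * x ^ n) M) (PSeries a x)).
  { apply series_lim. apply is_pseries_R. apply PSeries_correct. apply Hex. lra. }
  assert (Hb : forall M, (N0 <= M)%nat -> Rabs (sum_f_R0 (fun n => a n * x ^ n) M - l) <= (1 - x) * C + eps / 2).
  { intros M HM. rewrite abel_id.
    eapply Rle_trans. apply Rabs_triang. rewrite !Rabs_mult.
    rewrite (Rabs_pos_eq (1 - x)) by lra. rewrite (Rabs_pos_eq (x ^ S M)) by apply Hxn.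
    assert (H1 : Rabs (sum_f_R0 (fun n => (sum_f_R0 a n - l) * x ^ n) M) <= sum_f_R0 (fun n => Rabs (sum_f_R0 a n - l) * x ^ n) M).
    { eapply Rle_trans. apply sum_f_R0_triangle. apply sum_Rle. intros n _. rewrite Rabs_mult, (Rabs_pos_eq (x ^ n)) by apply Hxn. lra. }
    assert (H2 : sum_f_R0 (fun n => Rabs (sum_f_R0 a n - l) * x ^ n) M <=
       sum_f_R0 (fun n => Rabs (sum_f_R0 a n - l) * x ^ n) N0 + sum_f_R0 (fun n => eps / 2 * x ^ n) M).
    { apply sum_split_bound.
      - intros n. apply Rmult_le_pos. apply Rabs_pos. apply Hxn.
      - intros n. apply Rmult_le_pos. lra. apply Hxn.
      - intros n Hn. apply Rmult_le_compat_r. apply Hxn. apply Rlt_le, HN0. lia. }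
    assert (H3 : sum_f_R0 (fun n => Rabs (sum_f_R0 a n - l) * x ^ n) N0 <= C).
    { apply sum_Rle. intros n _. specialize (Hxn n). pose proof (Rabs_pos (sum_f_R0 a n - l)). nra. }
    assert (H4 : (1 - x) * sum_f_R0 (fun n => eps / 2 * x ^ n) M = eps / 2 * (1 - x ^ S M)).
    { assert (E : forall N, sum_f_R0 (fun n => eps / 2 * x ^ n) N = eps / 2 * sum_f_R0 (fun n => x ^ n) N).
      { induction N. simpl; ring. rewrite !tech5, IHN. ring. }
      rewrite E, tech3 by lra. field. lra. }
    assert (H5 : Rabs (sum_f_R0 a M - l) < eps / 2) by (apply HN0; lia).
    specialize (Hxn (S M)).
    assert (0 <= 1 - x) by lra.
    assert ((1 - x) * Rabs (sum_f_R0 (fun n => (sum_f_R0 a n - l) * x ^ n) M) <= (1 - x) * (C + sum_f_R0 (fun n => eps / 2 * x ^ n) M)).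
    { apply Rmult_le_compat_l. lra. lra. }
    rewrite Rmult_plus_distr_l, H4 in H0.
    nra. }
  assert (Hlim : Rbar_le (Rabs (PSeries a x - l)) ((1 - x) * C + eps / 2)).
  { apply (is_lim_seq_le (fun M => Rabs (sum_f_R0 (fun n => a n * x ^ n) (M + N0) - l)) (fun _ => (1 - x) * C + eps / 2)).
    - intros M. apply Hb. lia.
    - apply (is_lim_seq_abs _ (PSeries a x - l)). apply is_lim_seq_minus'. 
      apply (is_lim_seq_incr_n _ N0) in HT. exact HT. apply is_lim_seq_const.
    - apply is_lim_seq_const. }
  simpl in Hlim.
  assert ((1 - x) * C <= eps / (2 * (C + 1)) * C) by (apply Rmult_le_compat_r; lra).
  assert (eps / (2 * (C + 1)) * C < eps / 2).
  { unfold Rdiv. rewrite Rinv_mult. 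
    replace (eps * (/ 2 * / (C + 1)) * C) with (eps / 2 * (C / (C + 1))) by (field; lra).
    assert (C / (C + 1) < 1).
    { apply Rmult_lt_reg_r with (C + 1). lra. unfold Rdiv. rewrite Rmult_assoc, Rinv_l by lra. lra. }
    assert (0 <= C / (C + 1)) by (apply Rdiv_le_0_compat; lra).
    nra. }
  lra.
Qed.

Definition LL (f : R -> R) (l : R) := filterlim f (at_left 1) (locally l).

Lemma ball_R (c e y : R) : ball c e y <-> Rabs (y - c) < e.
Proof. reflexivity. Qed.

Lemma LL_plus f g a b : LL f a -> LL g b -> LL (fun x => f x + g x) (a + b).
Proof.
  intros Hf Hg. unfold LL.
  apply (filterlim_comp_2 f g Rplus Hf Hg). apply (filterlim_plus a b).
Qed.

Lemma LL_mult f g a b : LL f a -> LL g b -> LL (fun x => f x * g x) (a * b).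
Proof.
  intros Hf Hg. unfold LL.
  apply (filterlim_comp_2 f g Rmult Hf Hg). apply (filterlim_mult a b).
Qed.

Lemma LL_const c : LL (fun _ => c) c.
Proof. unfold LL. apply filterlim_const. Qed.

Lemma at_left_le : filter_le (at_left 1) (locally 1).
Proof. intros P HP. unfold at_left, within. apply filter_imp with P; auto. Qed.

Lemma LL_cont f : continuous f 1 -> LL f (f 1).
Proof. intros H. unfold LL. apply (filterlim_filter_le_1 _ at_left_le). exact H. Qed.

Lemma LL_ext f g l : LL f l -> (forall x, 0 < x < 1 -> f x = g x) -> LL g l.
Proof.
  intros H E. unfold LL. apply (filterlim_ext_loc f g); auto.
  unfold at_left, within. exists (mkposreal (1/2) ltac:(lra)). intros y Hy Hy1.
  apply ball_R in Hy. simpl in Hy. apply E. apply Rabs_def2 in Hy. destruct Hy. change (minus y 1) with (y - 1) in *. lra.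
Qed.

Lemma LL_unique f a b : LL f a -> LL f b -> a = b.
Proof.
  intros Ha Hb.
  exact (@filterlim_locally_unique R R_AbsRing R_NormedModule (at_left 1)
    (Proper_StrongProper _ (at_left_proper_filter 1)) f a b Ha Hb).
Qed.

Lemma LL_abel (a : nat -> R) l : is_series a l -> (forall x, 0 <= x < 1 -> ex_pseries a x) -> LL (PSeries a) l.
Proof.
  intros H1 H2. unfold LL. apply filterlim_locally. intros eps.
  destruct (abel_eps a l H1 H2 eps (cond_pos eps)) as [d [Hd Hx]].
  unfold at_left, within. exists (mkposreal d Hd). intros y Hy Hy1.
  apply ball_R in Hy. simpl in Hy. apply ball_R. apply Hx. apply Rabs_def2 in Hy. destruct Hy. change (minus y 1) with (y - 1) in *. simpl in *. lra.
Qed.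

Ltac toR := match goal with |- ?a = ?b => change (@eq R a b) end.

Definition word := list (nat * R).
Definition step (t : Q * word) : list (Q * word) :=
  ((2 * fst t)%Q, bump (snd t)) :: (fst t, (1%nat, -1) :: flip (snd t)) :: nil.
Fixpoint Gt (k : nat) : list (Q * word) := match k with
  | O => ((-1)%Q, (1%nat, -1) :: (1%nat, 1) :: nil) :: nil
  | S k => flat_map step (Gt k) end.
Definition Gval (T : list (Q * word)) (x : R) : R :=
  fold_right (fun t acc => Q2R (fst t) * Lam (snd t) x + acc) 0 T.

Definition wt (w : word) := fold_right (fun p acc => (fst p + acc)%nat) 0%nat w.

Lemma wt_flip w : wt (flip w) = wt w.
Proof. destruct w as [|[s e] v]; reflexivity. Qed.

Lemma flip_flip w : flip (flip w) = w.
Proof. destruct w as [|[s e] v]; simpl; auto. rewrite Ropp_involutive. reflexivity. Qed.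

Lemma idx_bump W w : cmzv2_index W w -> cmzv2_index (S W) (bump w).
Proof.
  intros [Hn [Hf [Hw Hfst]]]. destruct w as [|[s e] v]; [congruence|].
  inversion Hf; subst. simpl in H1. destruct H1 as [H1 H1'].
  split; [discriminate|]. split; [|split].
  - constructor; auto. simpl. split; [lia|auto].
  - simpl in *. lia.
  - simpl. intros [Hs _]. lia.
Qed.

Lemma idx_alt W w : cmzv2_index W w -> cmzv2_index (S W) ((1%nat, -1) :: flip w).
Proof.
  intros [Hn [Hf [Hw Hfst]]]. split; [discriminate|]. split; [|split].
  - constructor. simpl. split; [lia|ring]. apply (good_flip w Hf).
  - change (S (wt (flip w)) = S W). rewrite wt_flip. unfold wt. rewrite Hw. reflexivity.
  - simpl. intros [_ H]. lra.
Qed.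

Lemma ok_Gt k : List.Forall (fun t => cmzv2_index (S (S k)) (snd t)) (Gt k).
Proof.
  induction k.
  - constructor; [|constructor]. simpl. split; [discriminate|]. split; [|split].
    + constructor. split; simpl; [lia|ring]. constructor. split; simpl; [lia|ring]. constructor.
    + reflexivity.
    + intros [_ H]. lra.
  - simpl. induction (Gt k) as [|t T IH]. constructor.
    inversion IHk; subst. simpl. constructor. apply idx_bump; auto.
    constructor. apply idx_alt; auto. apply IH; auto.
Qed.

Lemma idx_good W w : cmzv2_index W w -> List.Forall good w /\ w <> nil.
Proof. intros [Hn [Hf _]]. split; auto. Qed.

Lemma is_derive_eq (f : R -> R) x a b : is_derive f x a -> a = b -> is_derive f x b.
Proof. intros H ->. exact H. Qed.

Lemma Q2R_2q q : Q2R (2 * q) = 2 * Q2R q.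
Proof. rewrite Q2R_mult. f_equal. unfold Q2R. simpl. field. Qed.

Lemma Gval_derive T x : 0 < x < 1 -> List.Forall (fun t => List.Forall good (snd t) /\ snd t <> nil) T ->
  is_derive (Gval (flat_map step T)) x ((2 + x) / (x * (1 + x)) * Gval T x).
Proof.
  intros Hx HT. induction T as [|[q w] T IH].
  - simpl. eapply is_derive_eq. apply is_derive_const. unfold Gval; simpl. rewrite Rmult_0_r. reflexivity.
  - inversion HT as [|? ? [Hg Hn] HT']; subst. specialize (IH HT').
    simpl in Hg, Hn. destruct w as [|[s e] v]; [congruence|].
    eapply is_derive_ext with (f := fun y => Q2R (2 * q) * Lam ((S s, e) :: v) y +
        (Q2R q * Lam ((1%nat, -1) :: flip ((s, e) :: v)) y + Gval (flat_map step T) y)).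
    { intros; reflexivity. }
    eapply is_derive_eq.
    apply (is_derive_plus (fun y => Q2R (2 * q) * Lam ((S s, e) :: v) y)).
    apply is_derive_scal. apply Lam_derive_bump; auto. lra. apply Rabs_def1; lra.
    apply (is_derive_plus (fun y => Q2R q * Lam ((1%nat, -1) :: flip ((s, e) :: v)) y)).
    apply is_derive_scal. apply Lam_derive_alt. apply good_flip; auto. apply Rabs_def1; lra.
    exact IH.
    toR. rewrite flip_flip, Q2R_2q. unfold Gval; simpl fold_right. change plus with Rplus. field. lra.
Qed.

Lemma Lam_ex_derive w x : List.Forall good w -> Rabs x < 1 -> ex_derive (Lam w) x.
Proof. intros Hw Hx. eexists. apply is_derive_PSeries. apply R1_lt; auto. apply coef_R1; auto. Qed.

Lemma Gval_ex_derive T x : List.Forall (fun t => List.Forall good (snd t)) T -> Rabs x < 1 -> ex_derive (Gval T) x.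
Proof.
  intros HT Hx. induction T as [|[q w] T IH].
  - apply ex_derive_const.
  - inversion HT; subst. simpl in H1.
    apply (ex_derive_plus (fun y => Q2R q * Lam w y) (Gval T)).
    apply ex_derive_scal. apply Lam_ex_derive; auto. apply IH; auto.
Qed.

Lemma cont_of_ex (f : R -> R) x : ex_derive f x -> continuity_pt f x.
Proof. intros H. apply continuity_pt_filterlim. apply (@ex_derive_continuous R_AbsRing R_NormedModule f x H). Qed.

Lemma Gval_0 T : List.Forall (fun t => snd t <> nil) T -> Gval T 0 = 0.
Proof.
  intros HT. induction T as [|[q w] T IH]. reflexivity.
  inversion HT; subst. change (Gval ((q,w)::T) 0) with (Q2R q * Lam w 0 + Gval T 0). rewrite IH by auto. rewrite Lam_0 by auto. ring.
Qed.

Lemma uniq_step (f g kf h1 h2 : R -> R) :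
  (forall x, 0 < x < 1 -> is_derive f x (kf x * h1 x)) ->
  (forall x, 0 < x < 1 -> is_derive g x (kf x * h2 x)) ->
  (forall x, 0 < x < 1 -> h1 x = h2 x) ->
  (forall x, 0 <= x < 1 -> continuity_pt f x) ->
  (forall x, 0 <= x < 1 -> continuity_pt g x) ->
  f 0 = g 0 -> forall y, 0 <= y < 1 -> f y = g y.
Proof.
  intros Hf Hg Hh Cf Cg H0 y Hy.
  destruct (Req_dec y 0) as [->|Hy0]; auto.
  destruct (MVT_gen (fun x => f x - g x) 0 y (fun _ => 0)) as [c [Hc E]].
  - intros x Hx. rewrite Rmin_left, Rmax_right in Hx by lra.
    eapply is_derive_eq. apply (is_derive_minus f g). apply Hf; lra. apply Hg; lra.
    toR. rewrite Hh by lra. change minus with Rminus. ring.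
  - intros x Hx. rewrite Rmin_left, Rmax_right in Hx by lra.
    apply continuity_pt_minus. apply Cf; lra. apply Cg; lra.
  - simpl in E. lra.
Qed.

Lemma ODE01 z : Rabs z < 1 -> (4 - z) * Fs 0 z = 2 * Fs 1 z + z.
Proof.
  intros Hz.
  set (c := PS_minus (PS_minus (PS_scal 4 (acoef 0)) (PS_incr_1 (acoef 0))) (PS_scal 2 (acoef 1))).
  set (e1 := fun n : nat => match n with 1%nat => 1 | _ => 0 end).
  assert (Ex0 : ex_pseries (acoef 0) z) by (apply R1_ex; auto; apply acoef_R1).
  assert (Ex1 : ex_pseries (acoef 1) z) by (apply R1_ex; auto; apply acoef_R1).
  assert (Hc : PSeries c z = PSeries e1 z).
  { apply PSeries_ext. intros n. exact (acoef_rec n). }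
  assert (He : PSeries e1 z = z).
  { rewrite PSeries_decr_1. replace (PSeries (PS_decr_1 e1) z) with (Lam nil z).
    rewrite Lam_nil. simpl. ring. apply PSeries_ext. intros [|n]; reflexivity.
    apply R1_ex; auto. apply (R1_bounded _ 1). intros [|[|n]]; simpl; rewrite ?Rabs_R0, ?Rabs_R1; lra. }
  unfold c in Hc. rewrite PSeries_minus, PSeries_minus, PSeries_scal, PSeries_scal, PSeries_incr_1 in Hc.
  unfold Fs. rewrite He in Hc. lra.
  - apply ex_pseries_scal. apply Rmult_comm. auto.
  - apply ex_pseries_incr_1. auto.
  - apply R1_ex; auto. apply (R1_bounded _ 5). intros n. unfold PS_minus, PS_scal, PS_incr_1, PS_opp.
    change (Rabs (4 * acoef 0 n + - (match n with O => 0 | S m => acoef 0 m end)) <= 5).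
    pose proof (acoef_bound 0 n). destruct n as [|m].
    change (acoef 0 0) with 0. rewrite Rmult_0_r, Ropp_0, Rplus_0_r, Rabs_R0. lra.
    pose proof (acoef_bound 0 m). eapply Rle_trans. apply Rabs_triang. rewrite Rabs_Ropp, Rabs_mult, (Rabs_pos_eq 4) by lra. lra.
  - apply ex_pseries_scal. apply Rmult_comm. auto.
Qed.

Definition L1 x := Lam ((1%nat, -1) :: nil) x.
Definition Bf x := x * L1 x / (2 + x).

Lemma L1_derive x : Rabs x < 1 -> is_derive L1 x (- 1 / (1 + x)).
Proof.
  intros Hx. eapply is_derive_eq. apply (Lam_derive_alt nil x); auto.
  simpl flip. rewrite Lam_nil. reflexivity.
Qed.

Lemma phi_derive (P L : R -> R) x dP dL : x <> 0 -> is_derive P x dP -> is_derive L x dL ->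
  is_derive (fun y => P y * (2 + y) / y - L y) x ((dP * (2 + x) + P x) / x - P x * (2 + x) / (x * x) - dL).
Proof.
  intros Hx HP HL.
  assert (EP : ex_derive P x) by (eexists; eauto).
  assert (EL : ex_derive L x) by (eexists; eauto).
  auto_derive. repeat split; auto.
  replace (Derive (fun x0 => P x0) x) with dP by (symmetry; apply is_derive_unique; auto).
  replace (Derive (fun x0 => L x0) x) with dL by (symmetry; apply is_derive_unique; auto).
  field. auto.
Qed.

Lemma const_lim0 (g : R -> R) c : continuity_pt g 0 -> g 0 = 0 -> (forall x, 0 < x < 1 -> g x = c) -> c = 0.
Proof.
  intros Hg H0 Hc. destruct (Req_dec c 0) as [|Hne]; auto. exfalso.
  destruct (Hg (Rabs c) (Rabs_pos_lt c Hne)) as [alp [Halp H]].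
  set (x := Rmin (alp / 2) (1 / 2)).
  assert (Hx1 : 0 < x) by (apply Rmin_pos; lra).
  assert (Hx2 : x <= alp / 2) by apply Rmin_l. assert (Hx3 : x <= 1 / 2) by apply Rmin_r.
  specialize (H x). simpl in H. unfold R_dist, D_x, no_cond in H.
  rewrite H0, Hc in H by lra. rewrite Rminus_0_r in H.
  assert (Hf : Rabs (c - 0) < Rabs c). apply H. split. split; auto; lra. rewrite Rabs_pos_eq; lra.
  rewrite Rminus_0_r in Hf. lra.
Qed.

Lemma base1 x : 0 < x < 1 -> Fs 1 (zf x) = Bf x.
Proof.
  set (phi := fun y => Fs 1 (zf y) * (2 + y) / y - L1 y).
  assert (Dphi : forall y, 0 < y < 1 -> is_derive phi y 0).
  { intros y Hy. eapply is_derive_eq. apply phi_derive. lra.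
    apply (FDz 0 y). lra. apply L1_derive. apply Rabs_def1; lra.
    assert (Hz := zf_small y ltac:(lra)).
    assert (E := ODE01 (zf y) Hz).
    replace (Fs 0 (zf y)) with ((2 * Fs 1 (zf y) + zf y) / (4 - zf y)).
    toR. unfold zf. field. split. lra. split. lra. 
    replace (4 * (1 + y) + y * y) with ((2 + y) * (2 + y)) by ring. nra.
    rewrite <- E. field. unfold zf.
    replace (4 - - (y * y) / (1 + y)) with ((2 + y) * (2 + y) / (1 + y)) by (field; lra).
    apply Rgt_not_eq. apply Rdiv_lt_0_compat; nra. }
  assert (Hconst : forall y, 0 < y < 1 -> phi y = phi (1/2)).
  { intros y Hy.
    destruct (MVT_gen phi y (1/2) (fun _ => 0)) as [c [Hc E]].
    - intros t Ht. apply Dphi. split.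
      apply Rlt_le_trans with (Rmin y (1/2)). apply Rmin_pos; lra. lra.
      apply Rle_lt_trans with (Rmax y (1/2)). lra. apply Rmax_lub_lt; lra.
    - intros t Ht. apply cont_of_ex. eexists. apply Dphi. split.
      apply Rlt_le_trans with (Rmin y (1/2)). apply Rmin_pos; lra. lra.
      apply Rle_lt_trans with (Rmax y (1/2)). lra. apply Rmax_lub_lt; lra.
    - lra. }
  set (Qd := PSeries (PS_decr_1 (acoef 1))).
  assert (RQ : R1 (PS_decr_1 (acoef 1))) by (apply (R1_bounded _ 1); intros; apply acoef_bound).
  set (g := fun y => - (y * (2 + y)) / (1 + y) * Qd (zf y) - L1 y).
  assert (Hg0 : g 0 = 0).
  { unfold g. unfold L1. rewrite Lam_0 by discriminate. unfold Rdiv. ring. }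
  assert (Hgc : continuity_pt g 0).
  { apply cont_of_ex. unfold g.
    apply (ex_derive_minus (fun y => - (y * (2 + y)) / (1 + y) * Qd (zf y)) L1 0).
    apply (ex_derive_mult (fun y => - (y * (2 + y)) / (1 + y)) (fun y => Qd (zf y)) 0).
    auto_derive. lra.
    eexists. apply (is_derive_comp Qd zf). unfold Qd. apply is_derive_PSeries. apply R1_lt; auto.
    apply zf_small; lra. apply zf_derive; lra.
    eexists. apply L1_derive. rewrite Rabs_R0; lra. }
  assert (Hgphi : forall y, 0 < y < 1 -> g y = phi (1/2)).
  { intros y Hy. rewrite <- (Hconst y Hy). unfold g, phi.
    rewrite (Fs_decr 1 (zf y)) by (apply zf_small; lra). unfold Qd, zf. field. lra. }
  assert (H0 := const_lim0 g (phi (1/2)) Hgc Hg0 Hgphi).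
  intros Hx. specialize (Hconst x Hx). rewrite H0 in Hconst. unfold phi in Hconst. unfold Bf.
  apply Rmult_eq_reg_r with ((2 + x) / x).
  replace (x * L1 x / (2 + x) * ((2 + x) / x)) with (L1 x) by (field; lra).
  unfold Rdiv at 1 in Hconst. lra.
  apply Rgt_not_eq. apply Rdiv_lt_0_compat; lra.
Qed.

Lemma Q2R_m1 : Q2R (-1) = -1.
Proof. unfold Q2R. simpl. field. Qed.

Lemma flip11 : flip ((1%nat, 1) :: nil) = (1%nat, -1) :: nil.
Proof. simpl. repeat f_equal; try lra. Qed.

Lemma Fz0 s : Fs s (zf 0) = 0.
Proof.
  unfold zf. replace (- (0 * 0) / (1 + 0)) with 0 by field. unfold Fs. rewrite PSeries_0. reflexivity.
Qed.

Lemma Fz_cont s x : 0 <= x <= 1 -> continuity_pt (fun x => Fs s (zf x)) x.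
Proof. intros H. apply cont_of_ex. apply FDz_ex. auto. Qed.

Lemma Gt_good k : List.Forall (fun t => List.Forall good (snd t) /\ snd t <> nil) (Gt k).
Proof.
  eapply List.Forall_impl; [|apply ok_Gt]. intros t H. apply (idx_good _ _ H).
Qed.

Lemma Gt_good' k : List.Forall (fun t => List.Forall good (snd t)) (Gt k).
Proof. eapply List.Forall_impl; [|apply Gt_good]. intros t [H _]. exact H. Qed.

Lemma Gt_nn k : List.Forall (fun t => snd t <> nil) (Gt k).
Proof. eapply List.Forall_impl; [|apply Gt_good]. intros t [_ H]. exact H. Qed.

Lemma Gt_cont k x : 0 <= x < 1 -> continuity_pt (Gval (Gt k)) x.
Proof. intros H. apply cont_of_ex. apply Gval_ex_derive. apply Gt_good'. apply Rabs_def1; lra. Qed.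

Lemma key k : forall x, 0 <= x < 1 -> Fs (S (S k)) (zf x) = Gval (Gt k) x.
Proof.
  induction k.
  - apply (uniq_step _ _ (fun x => (2 + x) / (x * (1 + x))) (fun x => Fs 1 (zf x)) Bf).
    + intros x Hx. apply FDz. lra.
    + intros x Hx.
      eapply is_derive_ext with (f := fun y => Q2R (-1) * Lam ((1%nat, -1) :: (1%nat, 1) :: nil) y + 0).
      { intros; reflexivity. }
      eapply is_derive_eq. apply (is_derive_plus (fun y => Q2R (-1) * Lam ((1%nat, -1) :: (1%nat, 1) :: nil) y) (fun _ => 0)).
      apply is_derive_scal. apply Lam_derive_alt. constructor; [|constructor]. split; simpl; [lia|ring].
      apply Rabs_def1; lra. apply is_derive_const.
      toR. rewrite flip11, Q2R_m1. unfold Bf, L1. change plus with Rplus. change (@zero R_NormedModule) with 0. field. lra.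
    + intros x Hx. apply base1. auto.
    + intros x Hx. apply Fz_cont. lra.
    + apply Gt_cont.
    + rewrite Fz0. symmetry. apply Gval_0. apply (Gt_nn 0).
  - apply (uniq_step _ _ (fun x => (2 + x) / (x * (1 + x))) (fun x => Fs (S (S k)) (zf x)) (Gval (Gt k))).
    + intros x Hx. apply FDz. lra.
    + intros x Hx. apply Gval_derive. auto. apply Gt_good.
    + intros x Hx. apply IHk. lra.
    + intros x Hx. apply Fz_cont. lra.
    + apply Gt_cont.
    + rewrite Fz0. symmetry. apply Gval_0. apply (Gt_nn (S k)).
Qed.

Lemma word_lim W w : cmzv2_index W w -> is_lim_seq (msum w) (Series (coef w)) /\ LL (Lam w) (Series (coef w)).
Proof.
  intros Hi. destruct (idx_good _ _ Hi) as [Hg Hn].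
  destruct Hi as [_ [_ [_ Hf]]]. destruct w as [|[s e] v]; [congruence|].
  assert (Hc : ex_series (coef ((s,e)::v))) by (apply coef_conv; auto).
  assert (Hs := Series_correct _ Hc).
  split.
  - apply is_lim_seq_ext with (u := fun n => sum_f_R0 (coef ((s,e)::v)) n).
    intros n. symmetry. apply msum_sum. discriminate.
    apply series_lim. exact Hs.
  - apply LL_abel. exact Hs. intros x Hx. apply R1_ex. apply coef_R1; auto. apply Rabs_def1; lra.
Qed.

Lemma Gval_LL T : List.Forall (fun t => exists W, cmzv2_index W (snd t)) T ->
  LL (Gval T) (fold_right (fun t acc => Q2R (fst t) * Series (coef (snd t)) + acc) 0 T).
Proof.
  intros HT. induction T as [|t T IH].
  - apply LL_const.
  - inversion HT as [|? ? [W HW] HT']; subst.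
    change (LL (fun x => Q2R (fst t) * Lam (snd t) x + Gval T x) (Q2R (fst t) * Series (coef (snd t)) + fold_right (fun t acc => Q2R (fst t) * Series (coef (snd t)) + acc) 0 T)).
    apply LL_plus. apply LL_mult. apply LL_const. apply (word_lim W). auto. auto.
Qed.

Lemma thm_term_eq s m : acoef s (S m) * (-1/2) ^ (S m) = thm_term s (S m).
Proof.
  unfold thm_term, acoef.
  replace (-1/2) with (-1 * / 2) by field. rewrite Rpow_mult_distr, pow_inv.
  pose proof (INR_fact_neq_0 (S m)). pose proof (INR_fact_neq_0 (2 * S m)).
  pose proof (INR_S_pos m).
  assert (INR (S m) ^ s <> 0) by (apply pow_nonzero; lra).
  assert (2 ^ S m <> 0) by (apply pow_nonzero; lra).
  field. repeat split; auto.
Qed.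

Lemma sum_shift (b : nat -> R) n : sum_f_R0 b (S n) = b 0%nat + sum_f_R0 (fun k => b (S k)) n.
Proof. induction n. simpl. ring. rewrite tech5, IHn, tech5. ring. Qed.

Lemma ser s : is_series (fun k => thm_term s (S k)) (Fs s (-1/2)).
Proof.
  assert (Hex : ex_pseries (acoef s) (-1/2)) by (apply R1_ex; [apply acoef_R1| rewrite Rabs_left; lra]).
  apply PSeries_correct in Hex. apply is_pseries_R in Hex.
  apply series_lim in Hex. apply is_lim_seq_incr_1 in Hex.
  apply is_lim_seq_ext with (v := sum_n (fun k => thm_term s (S k))) in Hex. exact Hex.
  intros n. rewrite sum_n_Reals, sum_shift. simpl acoef. rewrite Rmult_0_l, Rplus_0_l.
  apply sum_eq. intros i _. apply thm_term_eq.
Qed.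

Lemma zf1 : zf 1 = -1/2.
Proof. unfold zf. field. Qed.

Lemma LL_F s : LL (fun x => Fs s (zf x)) (Fs s (-1/2)).
Proof.
  rewrite <- zf1. apply (LL_cont (fun x => Fs s (zf x))).
  apply (@ex_derive_continuous R_AbsRing R_NormedModule). apply FDz_ex. lra.
Qed.

Theorem theorem4p18 (s : nat) (hs : (1 <= s)%nat) :
  exists x : R, is_series (fun k : nat => thm_term s (S k)) x /\ in_CMZV2 s x.
Proof.
  exists (Fs s (-1/2)). split. apply ser.
  destruct s as [|[|k]]. lia.
  - set (w1 := (1%nat, -1) :: nil).
    assert (Hi : cmzv2_index 1 w1).
    { split. discriminate. split. constructor. split; simpl; [lia|ring]. constructor.
      split. reflexivity. simpl. intros [_ H]; lra. }
    destruct (word_lim 1 w1 Hi) as [Hm HL].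
    exists (((1#3)%Q, w1, Series (coef w1)) :: nil). split.
    + constructor; [|constructor]. simpl. split; auto.
    + simpl fold_right. simpl fst. simpl snd.
      assert (HB : LL Bf (Series (coef w1) * (1 / (2 + 1)))).
      { apply LL_ext with (f := fun x => L1 x * (x / (2 + x))).
        apply LL_mult. exact HL.
        apply (LL_cont (fun x => x / (2 + x))).
        apply (@ex_derive_continuous R_AbsRing R_NormedModule). auto_derive. lra.
        intros x Hx. unfold Bf. field. lra. }
      assert (HF : LL (fun x => Fs 1 (zf x)) (Series (coef w1) * (1 / (2 + 1)))).
      { apply LL_ext with (f := Bf). exact HB. intros x Hx. symmetry. apply base1. auto. }
      rewrite (LL_unique _ _ _ (LL_F 1) HF).
      unfold Q2R. simpl. field.
  - exists (map (fun t => (fst t, snd t, Series (coef (snd t)))) (Gt k)). split.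
    + apply List.Forall_map. eapply List.Forall_impl; [|apply ok_Gt]. intros t H. simpl. split; auto.
      apply (word_lim _ _ H).
    + transitivity (fold_right (fun t acc => Q2R (fst t) * Series (coef (snd t)) + acc) 0 (Gt k)).
      * apply (LL_unique (fun x => Fs (S (S k)) (zf x))). apply LL_F.
        apply LL_ext with (f := Gval (Gt k)).
        apply Gval_LL. eapply List.Forall_impl; [|apply ok_Gt]. intros t H. eexists; exact H.
        intros x Hx. symmetry. apply key. lra.
      * induction (Gt k) as [|t T IH]. reflexivity. simpl. rewrite IH. reflexivity.
Qed.
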